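(* For $n\in\mathbb{N}$, let $f(n)\in\mathbb{N}\cup\{+\infty\}$ denote the largest number (supremum) of pairwise inequivalent nice bases that a real nilpotent Lie algebra of dimension $n$ can carry. Then the function $f\colon\mathbb{N}\to\mathbb{N}\cup\{+\infty\}$ is nondecreasing and unbounded; more precisely, for every $n$, \[f(n)\geq \left\lfloor\frac n6\right\rfloor+1.\]
   Context: Let $\mathfrak{g}$ be a real Lie algebra with basis $\mathcal B=\{e_1,\dots,e_n\}$ and dual basis $\{e^1,\dots,e^n\}$, and let $d$ denote the Chevalley–Eilenberg differential ($de^k(x,y)=-e^k([x,y])$). The basis $\mathcal B$ is called nice if (i) for all $i,j$, $[e_i,e_j]$ is a (possibly zero) multiple of some element of $\mathcal B$, and (ii) for all $i,j$, the contraction $e_i\lrcorner\, de^j$ is a multiple of some element of $\{e^1,\dots,e^n\}$. Two nice bases $\mathcal B_1$ of $\mathfrak{g}_1$ and $\mathcal B_2$ of $\mathfrak{g}_2$ are equivalent if there is a Lie algebra isomorphism $\mathfrak{g}_1\to\mathfrak{g}_2$ mapping each element of $\mathcal B_1$ to a multiple of an element of $\mathcal B_2$. *)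

(* Defs.v *)
From HB Require Import structures.
From mathcomp Require Import all_boot all_order all_algebra.
From mathcomp Require Import boolp classical_sets reals ereal Rstruct.
Set Implicit Arguments. Unset Strict Implicit. Unset Printing Implicit Defensive.
Import Order.TTheory GRing.Theory Num.Theory.
Local Open Scope ring_scope.

Definition RR : realType := Rdefinitions.R.

Notation vec n := ('rV[RR]_n).

Definition is_lie_bracket (n : nat) (br : vec n -> vec n -> vec n) : Prop :=
  [/\ (forall (a : RR) x y z, br (a *: x + y) z = a *: br x z + br y z),
      (forall (a : RR) x y z, br z (a *: x + y) = a *: br z x + br z y),
      (forall x, br x x = 0) &
      (forall x y z, br x (br y z) + br y (br z x) + br z (br x y) = 0)].

Fixpoint iter_br (n : nat) (br : vec n -> vec n -> vec n) (xs : seq (vec n)) (y : vec n)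
  : vec n :=
  match xs with
  | [::] => y
  | x :: xs' => br x (iter_br br xs' y)
  end.

(* Nilpotent: the lower central series reaches 0, i.e. all sufficiently long
   iterated brackets vanish. *)
Definition is_nilpotent (n : nat) (br : vec n -> vec n -> vec n) : Prop :=
  exists k : nat, forall (xs : seq (vec n)) (y : vec n), size xs = k -> iter_br br xs y = 0.

Definition nilpotent_lie (n : nat) (br : vec n -> vec n -> vec n) : Prop :=
  is_lie_bracket br /\ is_nilpotent br.

Definition basis_mx (n : nat) (e : 'I_n -> vec n) : 'M[RR]_n := \matrix_(i < n) e i.

Definition is_basis (n : nat) (e : 'I_n -> vec n) : Prop := basis_mx e \in unitmx.

(* Dual basis: e^j(v) is the j-th coordinate of v in the basis e. *)
Definition dual (n : nat) (e : 'I_n -> vec n) (j : 'I_n) (v : vec n) : RR :=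
  (v *m invmx (basis_mx e)) 0 j.

(* Chevalley--Eilenberg differential of a 1-form: (d alpha)(x,y) = - alpha([x,y]). *)
Definition d1 (n : nat) (br : vec n -> vec n -> vec n) (alpha : vec n -> RR)
  (x y : vec n) : RR := - alpha (br x y).

Definition nice_basis (n : nat) (br : vec n -> vec n -> vec n) (e : 'I_n -> vec n) : Prop :=
  [/\ is_basis e,
      (forall i j : 'I_n, exists (k : 'I_n) (c : RR), br (e i) (e j) = c *: e k) &
      (forall i j : 'I_n, exists (k : 'I_n) (c : RR),
          forall y : vec n, d1 br (dual e j) (e i) y = c * dual e k y)].

Definition lie_automorphism (n : nat) (br : vec n -> vec n -> vec n) (phi : vec n -> vec n)
  : Prop :=
  [/\ (forall (a : RR) x y, phi (a *: x + y) = a *: phi x + phi y),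
      bijective phi &
      (forall x y, phi (br x y) = br (phi x) (phi y))].

Definition equiv_nice (n : nat) (br : vec n -> vec n -> vec n) (e1 e2 : 'I_n -> vec n)
  : Prop :=
  exists phi : vec n -> vec n, lie_automorphism br phi /\
    forall i : 'I_n, exists (j : 'I_n) (c : RR), phi (e1 i) = c *: e2 j.

Definition carries (n m : nat) : Prop :=
  exists br : vec n -> vec n -> vec n, nilpotent_lie br /\
    exists B : 'I_m -> 'I_n -> vec n,
      (forall k, nice_basis br (B k)) /\
      (forall k l : 'I_m, k != l -> ~ equiv_nice br (B k) (B l)).

(* f(n) in N u {+oo}, as a supremum in the extended reals. *)
Definition f (n : nat) : \bar RR :=
  ereal_sup [set (m%:R)%:E | m in [set m : nat | carries n m]].

(* Main.v *)
Require Import Defs.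
From mathcomp Require Import all_boot all_order all_algebra.
From mathcomp Require Import boolp classical_sets reals ereal Rstruct.
From mathcomp Require Import ring lra.
Set Implicit Arguments. Unset Strict Implicit. Unset Printing Implicit Defensive.
Import Order.TTheory GRing.Theory Num.Theory.
Local Open Scope ring_scope.

Section Basis.
Variable n : nat.
Implicit Types (e t : 'I_n -> vec n) (v w : vec n).

Lemma mul_basis e (w : 'rV[RR]_n) : w *m basis_mx e = \sum_j w 0 j *: e j.
Proof. by rewrite mulmx_sum_row; apply: eq_bigr => j _; rewrite rowK. Qed.

Lemma span_basis e : (forall v, exists w : 'I_n -> RR, v = \sum_j w j *: e j) -> is_basis e.
Proof.
move=> H; have [W HW] := choice H.
pose N := \matrix_(i < n) \row_j (W (delta_mx 0 i) j).
suff: N *m basis_mx e = 1%:M by case/mulmx1_unit.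
apply/row_matrixP => i; rewrite row_mul rowK mul_basis row1 [RHS]HW.
by apply: eq_bigr => j _; rewrite mxE.
Qed.

Lemma dual_coord e (w : 'I_n -> RR) v : is_basis e -> v = \sum_j w j *: e j ->
  forall j, dual e j v = w j.
Proof.
move=> He Hv j; rewrite /dual.
have -> : v = (\row_j w j) *m basis_mx e.
  by rewrite mul_basis Hv; apply: eq_bigr => k _; rewrite mxE.
by rewrite mulmxK // mxE.
Qed.

Lemma basis_expand e v : is_basis e -> v = \sum_j dual e j v *: e j.
Proof. by move=> He; rewrite -mul_basis /dual mulmxKV. Qed.

Lemma dual_basis e l j : is_basis e -> dual e j (e l) = (l == j)%:R.
Proof.
move=> He; apply: (dual_coord (w := fun j => (l == j)%:R)) => //.
rewrite (bigD1 l) //= eqxx scale1r big1 ?addr0 // => k /negbTE.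
by rewrite eq_sym => ->; rewrite scale0r.
Qed.

Lemma dualD e j v w : dual e j (v + w) = dual e j v + dual e j w.
Proof. by rewrite /dual mulmxDl mxE. Qed.
Lemma dualZ e j a v : dual e j (a *: v) = a * dual e j v.
Proof. by rewrite /dual -scalemxAl mxE. Qed.
Lemma dual0 e j : dual e j 0 = 0.
Proof. by rewrite /dual mul0mx mxE. Qed.
Lemma dual_sum (I : finType) e j (F : I -> vec n) :
  dual e j (\sum_i F i) = \sum_i dual e j (F i).
Proof. by rewrite /dual mulmx_suml summxE. Qed.

Lemma basis_neq0 e i : is_basis e -> e i != 0.
Proof.
move=> He; apply/eqP => H0; have := dual_basis i i He.
by rewrite H0 dual0 eqxx => /eqP; rewrite eq_sym oner_eq0.
Qed.

End Basis.
Section Bracket.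
Variable n : nat.
Variable br : vec n -> vec n -> vec n.
Hypothesis Hbr : is_lie_bracket br.

Lemma brDr x y z : br z (x + y) = br z x + br z y.
Proof. by case: Hbr => _ H _ _; have := H 1 x y z; rewrite !scale1r. Qed.
Lemma brDl x y z : br (x + y) z = br x z + br y z.
Proof. by case: Hbr => H _ _ _; have := H 1 x y z; rewrite !scale1r. Qed.
Lemma br0r x : br x 0 = 0.
Proof. by apply: (addrI (br x 0)); rewrite -brDr !addr0. Qed.
Lemma br0l x : br 0 x = 0.
Proof. by apply: (addrI (br 0 x)); rewrite -brDl !addr0. Qed.
Lemma brZr a x z : br z (a *: x) = a *: br z x.
Proof. by case: Hbr => _ H _ _; have := H a x 0 z; rewrite !addr0 br0r addr0. Qed.
Lemma brZl a x z : br (a *: x) z = a *: br x z.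
Proof. by case: Hbr => H _ _ _; have := H a x 0 z; rewrite !addr0 br0l addr0. Qed.
Lemma br_sumr (I : finType) (F : I -> vec n) z : br z (\sum_i F i) = \sum_i br z (F i).
Proof. by apply: (big_morph _ (fun x y => brDr x y z)); rewrite br0r. Qed.
Lemma br_suml (I : finType) (F : I -> vec n) z : br (\sum_i F i) z = \sum_i br (F i) z.
Proof. by apply: (big_morph (fun x => br x z) (fun x y => brDl x y z)); rewrite br0l. Qed.
Lemma br_anti x y : br x y = - br y x.
Proof.
case: Hbr => _ _ Halt _; apply/eqP; rewrite -addr_eq0.
by have := Halt (x + y); rewrite brDl !brDr !Halt add0r addr0 => ->.
Qed.

Lemma br_expand (I J : finType) (a : I -> RR) (b : J -> RR) u w :
  br (\sum_i a i *: u i) (\sum_j b j *: w j) =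
  \sum_i \sum_j (a i * b j) *: br (u i) (w j).
Proof.
rewrite br_suml; apply: eq_bigr => i _; rewrite brZl br_sumr scaler_sumr.
by apply: eq_bigr => j _; rewrite brZr scalerA.
Qed.

(* uniqueness condition equivalent to (iii) *)
Definition Ucond (e : 'I_n -> vec n) := forall i k l l',
  dual e k (br (e i) (e l)) != 0 -> dual e k (br (e i) (e l')) != 0 -> l = l'.

Lemma U_of_nice e : nice_basis br e -> Ucond e.
Proof.
case=> He _ H3 i k l l'; have [k' [c Hc]] := H3 i k.
have Hk : forall m, dual e k (br (e i) (e m)) != 0 -> m = k'.
  move=> m; have := Hc (e m); rewrite /d1 dual_basis //.
  move=> /eqP; rewrite eqr_oppLR => /eqP ->.
  by case: (@eqP _ m k') => [->//|_]; rewrite mulr0 oppr0 eqxx.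
by move=> /Hk -> /Hk ->.
Qed.

Lemma nice_of_U e : is_basis e ->
  (forall i j, exists k c, br (e i) (e j) = c *: e k) -> Ucond e -> nice_basis br e.
Proof.
move=> He H2 HU; split => // i j.
have [[l0 Hl0]|Hn] := pselect (exists l, dual e j (br (e i) (e l)) != 0).
  exists l0, (- dual e j (br (e i) (e l0))) => y.
  rewrite /d1 {1}(basis_expand y He) br_sumr dual_sum (bigD1 l0) //= big1.
    by rewrite addr0 brZr dualZ mulrC mulNr.
  move=> l Hl; rewrite brZr dualZ; apply/eqP; rewrite mulf_eq0; apply/orP; right.
  apply/negPn/negP => Hnz; move: Hl; by rewrite (HU _ _ _ _ Hnz Hl0) eqxx.
exists i, 0 => y; rewrite mul0r /d1 {1}(basis_expand y He) br_sumr dual_sum big1 ?oppr0 //.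
move=> l _; rewrite brZr dualZ; apply/eqP; rewrite mulf_eq0; apply/orP; right.
by apply/negPn/negP => Hnz; apply: Hn; exists l.
Qed.

Definition lob (e t : 'I_n -> vec n) (v : vec n) : vec n := \sum_i dual e i v *: t i.

Lemma lob_e e t l : is_basis e -> lob e t (e l) = t l.
Proof.
move=> He; rewrite /lob (bigD1 l) //= dual_basis // eqxx scale1r big1 ?addr0 //.
by move=> i Hi; rewrite dual_basis // eq_sym (negbTE Hi) scale0r.
Qed.

Lemma lob_lin e t a x y : lob e t (a *: x + y) = a *: lob e t x + lob e t y.
Proof.
rewrite /lob (scaler_sumr a) -big_split; apply: eq_bigr => i _ /=.
by rewrite dualD dualZ scalerDl scalerA.
Qed.

Lemma lob_sum e t (w : 'I_n -> RR) (u : 'I_n -> vec n) :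
  lob e t (\sum_i w i *: u i) = \sum_i w i *: lob e t (u i).
Proof.
rewrite /lob; under eq_bigr do rewrite dual_sum scaler_suml.
rewrite exchange_big /=; apply: eq_bigr => i _; rewrite scaler_sumr.
by apply: eq_bigr => j _; rewrite dualZ scalerA.
Qed.

Lemma lob_expand e t v : is_basis e -> lob e t v = \sum_i dual e i v *: t i.
Proof. by []. Qed.

Lemma lobD e t x y : lob e t (x + y) = lob e t x + lob e t y.
Proof. by have := lob_lin e t 1 x y; rewrite !scale1r. Qed.
Lemma lob0 e t : lob e t 0 = 0.
Proof. by rewrite /lob big1 // => i _; rewrite dual0 scale0r. Qed.
Lemma lobZ e t a x : lob e t (a *: x) = a *: lob e t x.
Proof. by have := lob_lin e t a x 0; rewrite !addr0 lob0 addr0. Qed.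
Lemma lob_sumF e t (I : finType) (F : I -> vec n) :
  lob e t (\sum_i F i) = \sum_i lob e t (F i).
Proof. by apply: (big_morph _ (lobD e t)); rewrite lob0. Qed.

Lemma lob_hom e t : is_basis e ->
  (forall i l, lob e t (br (e i) (e l)) = br (t i) (t l)) ->
  forall x y, lob e t (br x y) = br (lob e t x) (lob e t y).
Proof.
move=> He H x y.
have -> : br (lob e t x) (lob e t y) =
   \sum_i \sum_j (dual e i x * dual e j y) *: br (t i) (t j) by rewrite /lob br_expand.
rewrite {1}(basis_expand x He) {1}(basis_expand y He) br_expand lob_sumF.
apply: eq_bigr => i _; rewrite lob_sumF; apply: eq_bigr => j _.
by rewrite lobZ H.
Qed.

Lemma lob_inv e t v : is_basis e -> is_basis t -> lob t e (lob e t v) = v.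
Proof.
move=> He Ht; rewrite [in RHS](basis_expand v He) /lob; apply: eq_bigr => j _.
congr (_ *: _); by apply: dual_coord.
Qed.

End Bracket.
Section Equiv.
Variable n : nat.
Variable br : vec n -> vec n -> vec n.
Hypothesis Hbr : is_lie_bracket br.

Lemma equiv_of_map (e e' : 'I_n -> vec n) (tau : 'I_n -> 'I_n) (d : 'I_n -> RR) :
  is_basis e -> is_basis e' -> injective tau -> (forall i, d i != 0) ->
  (forall i l, lob e (fun i => d i *: e' (tau i)) (br (e i) (e l)) =
               br (d i *: e' (tau i)) (d l *: e' (tau l))) ->
  equiv_nice br e e'.
Proof.
move=> He He' Hinj Hd Hh.
set t := fun i => d i *: e' (tau i).
have Ht : is_basis t.
  apply: span_basis => v; exists (fun i => dual e' (tau i) v / d i).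
  rewrite {1}(basis_expand v He') (reindex_inj Hinj) /=.
  by apply: eq_bigr => i _; rewrite /t scalerA divfK.
exists (lob e t); split; last by move=> i; exists (tau i), (d i); rewrite lob_e.
split; first by move=> a x y; rewrite lob_lin.
  by exists (lob t e) => v; rewrite lob_inv.
exact: lob_hom.
Qed.

Definition Pp (x : vec n) := exists y y', forall a b : RR,
  a *: br x y + b *: br x y' = 0 -> a = 0 /\ b = 0.
Definition cnt (e : 'I_n -> vec n) : nat := \sum_(i < n) (`[< Pp (e i) >] : nat).

Section Aut.
Variable phi : vec n -> vec n.
Hypothesis Hphi : lie_automorphism br phi.
Lemma phiD x y : phi (x + y) = phi x + phi y.
Proof. by case: Hphi => H _ _; have := H 1 x y; rewrite !scale1r. Qed.
Lemma phi0 : phi 0 = 0.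
Proof. by apply: (addrI (phi 0)); rewrite -phiD !addr0. Qed.
Lemma phiZ a x : phi (a *: x) = a *: phi x.
Proof. by case: Hphi => H _ _; have := H a x 0; rewrite !addr0 phi0 addr0. Qed.
Lemma phi_br x y : phi (br x y) = br (phi x) (phi y).
Proof. by case: Hphi. Qed.
Lemma phi_inj : injective phi.
Proof. by case: Hphi => _ /bij_inj. Qed.
Lemma phi_eq0 x : phi x = 0 -> x = 0.
Proof. by move=> H; apply: phi_inj; rewrite H phi0. Qed.

Lemma Pp_aut x : Pp (phi x) <-> Pp x.
Proof.
case: Hphi => _ [g phig gphi] _; split.
  case=> Y [Y' H]; exists (g Y), (g Y') => a b Hab.
  apply: H; move: (congr1 phi Hab); rewrite phi0 phiD !phiZ !phi_br !gphi.
  by [].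
case=> y [y' H]; exists (phi y), (phi y') => a b Hab; apply: H.
by apply: phi_eq0; rewrite phiD !phiZ !phi_br.
Qed.
End Aut.

Lemma Pp_scale c x : c != 0 -> Pp (c *: x) <-> Pp x.
Proof.
move=> Hc; split.
  case=> y [y' H]; exists y, y' => a b Hab.
  have := H (a / c) (b / c); rewrite !(brZl Hbr) !scalerA !divfK //.
  move=> /(_ Hab) [Ha Hb]; split.
    by have := Ha; move/(congr1 (fun z => z * c)); rewrite divfK // mul0r.
  by have := Hb; move/(congr1 (fun z => z * c)); rewrite divfK // mul0r.
case=> y [y' H]; exists y, y' => a b Hab.
rewrite !(brZl Hbr) !scalerA in Hab.
have [/eqP Ha /eqP Hb] := H (a * c) (b * c) Hab; split; apply/eqP.
  by move: Ha; rewrite mulf_eq0 (negbTE Hc) orbF.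
by move: Hb; rewrite mulf_eq0 (negbTE Hc) orbF.
Qed.

Lemma equiv_data e e' : is_basis e -> is_basis e' -> equiv_nice br e e' ->
  exists phi (sc : 'I_n -> 'I_n) (c : 'I_n -> RR),
    [/\ lie_automorphism br phi, (forall i, phi (e i) = c i *: e' (sc i)),
        injective sc & forall i, c i != 0].
Proof.
move=> He He' [phi [Hphi Hmap]].
have [sc Hsc] := choice Hmap.
have [c Hc] : exists c : 'I_n -> RR, forall i, phi (e i) = c i *: e' (sc i).
  have [c Hc] := choice (fun i => Hsc i); by exists c.
have Hc0 : forall i, c i != 0.
  move=> i; apply/eqP => H0; have := Hc i; rewrite H0 scale0r => /(phi_eq0 Hphi).
  by move/eqP; rewrite (negbTE (basis_neq0 i He)).
exists phi, sc, c; split => //.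
  move=> i i' Hii'; apply/eqP/negP => /negP Hne.
  have H0 : c i' *: e i - c i *: e i' = 0.
    apply: (phi_eq0 Hphi); rewrite (phiD Hphi) -scaleNr !(phiZ Hphi) !Hc Hii' !scalerA.
    by rewrite mulNr scaleNr [c i * c i']mulrC subrr.
  have := congr1 (dual e i) H0; rewrite dual0 dualD -scaleN1r !dualZ !dual_basis // eqxx.
  rewrite eq_sym (negbTE Hne) mulr0 mulr0 addr0 mulr1 => /eqP; by rewrite (negbTE (Hc0 i')).
Qed.

Lemma cnt_equiv e e' : is_basis e -> is_basis e' -> equiv_nice br e e' -> cnt e = cnt e'.
Proof.
move=> He He' Heq; have [phi [sc [c [Hphi Hc Hinj Hc0]]]] := equiv_data He He' Heq.
rewrite /cnt [RHS](reindex_inj Hinj) /=; apply: eq_bigr => i _.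
have -> // : Pp (e i) = Pp (e' (sc i)).
apply: propext; rewrite -(Pp_aut Hphi) Hc; exact: Pp_scale.
Qed.

End Equiv.
Lemma sum_row_mx (a b : nat) (I : finType) (F : I -> 'rV[RR]_a) (G : I -> 'rV[RR]_b) :
  \sum_i row_mx (F i) (G i) = row_mx (\sum_i F i) (\sum_i G i).
Proof.
apply: (big_rec3 (fun x y z => x = row_mx y z)); first by rewrite row_mx0.
by move=> i x y z _ ->; rewrite add_row_mx.
Qed.

Lemma split_ind (a b : nat) (P : 'I_(a + b) -> Prop) :
  (forall i, P (lshift b i)) -> (forall j, P (rshift a j)) -> forall k, P k.
Proof. by move=> Hl Hr k; rewrite -(splitK k); case: (split k). Qed.

Lemma split_lshift (a b : nat) (i : 'I_a) : split (lshift b i) = inl i.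
Proof. by rewrite -[lshift b i]/(unsplit (inl i)) unsplitK. Qed.
Lemma split_rshift (a b : nat) (j : 'I_b) : split (rshift a j) = inr j.
Proof. by rewrite -[rshift a j]/(unsplit (inr j)) unsplitK. Qed.

Lemma iter_cat (m : nat) (br : vec m -> vec m -> vec m) xs ys y :
  iter_br br (xs ++ ys) y = iter_br br xs (iter_br br ys y).
Proof. by elim: xs => //= x xs ->. Qed.

Lemma nil_ge (m : nat) (br : vec m -> vec m -> vec m) k :
  (forall xs y, size xs = k -> iter_br br xs y = 0) ->
  forall xs y, (k <= size xs)%N -> iter_br br xs y = 0.
Proof.
move=> H xs y Hk; rewrite -(cat_take_drop k xs) iter_cat; apply: H.
by rewrite size_takel.
Qed.

Section DSum.
Variables a b : nat.
Variable br1 : vec a -> vec a -> vec a.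
Variable br2 : vec b -> vec b -> vec b.

Definition dsum (u v : vec (a + b)) : vec (a + b) :=
  row_mx (br1 (lsubmx u) (lsubmx v)) (br2 (rsubmx u) (rsubmx v)).

Lemma dsum_row x1 x2 y1 y2 :
  dsum (row_mx x1 x2) (row_mx y1 y2) = row_mx (br1 x1 y1) (br2 x2 y2).
Proof. by rewrite /dsum !row_mxKl !row_mxKr. Qed.

Lemma dsum_lie : is_lie_bracket br1 -> is_lie_bracket br2 -> is_lie_bracket dsum.
Proof.
case=> [L1 R1 A1 J1] [L2 R2 A2 J2]; split.
- by move=> c x y z; rewrite /dsum !linearP /= L1 L2 scale_row_mx add_row_mx.
- by move=> c x y z; rewrite /dsum !linearP /= R1 R2 scale_row_mx add_row_mx.
- by move=> x; rewrite /dsum A1 A2 row_mx0.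
- move=> x y z; rewrite /dsum !row_mxKl !row_mxKr !add_row_mx J1 J2 row_mx0 //.
Qed.

Lemma iter_dsum_l xs y :
  lsubmx (iter_br dsum xs y) = iter_br br1 (map lsubmx xs) (lsubmx y).
Proof. by elim: xs => //= x xs <-; rewrite /dsum row_mxKl. Qed.
Lemma iter_dsum_r xs y :
  rsubmx (iter_br dsum xs y) = iter_br br2 (map rsubmx xs) (rsubmx y).
Proof. by elim: xs => //= x xs <-; rewrite /dsum row_mxKr. Qed.

Lemma dsum_nil : nilpotent_lie br1 -> nilpotent_lie br2 -> nilpotent_lie dsum.
Proof.
case=> L1 [k1 N1] [L2 [k2 N2]]; split; first exact: dsum_lie.
exists (maxn k1 k2) => xs y Hs.
rewrite -[iter_br _ _ _]hsubmxK iter_dsum_l iter_dsum_r.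
rewrite (nil_ge N1) ?(nil_ge N2) ?row_mx0 // size_map Hs ?leq_maxl ?leq_maxr //.
Qed.

Variable e1 : 'I_a -> vec a.
Variable e2 : 'I_b -> vec b.

Definition dbas (k : 'I_(a + b)) : vec (a + b) :=
  match split k with inl i => row_mx (e1 i) 0 | inr j => row_mx 0 (e2 j) end.

Lemma dbas_l i : dbas (lshift b i) = row_mx (e1 i) 0.
Proof. by rewrite /dbas split_lshift. Qed.
Lemma dbas_r j : dbas (rshift a j) = row_mx 0 (e2 j).
Proof. by rewrite /dbas split_rshift. Qed.

Hypothesis He1 : is_basis e1.
Hypothesis He2 : is_basis e2.

Definition dcoord (v : vec (a + b)) (k : 'I_(a + b)) : RR :=
  match split k with inl i => dual e1 i (lsubmx v) | inr j => dual e2 j (rsubmx v) end.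

Lemma dbas_expand v : v = \sum_k dcoord v k *: dbas k.
Proof.
rewrite big_split_ord /=.
under eq_bigr do rewrite /dcoord dbas_l split_lshift scale_row_mx scaler0.
under [X in _ = _ + X]eq_bigr do rewrite /dcoord dbas_r split_rshift scale_row_mx scaler0.
rewrite !sum_row_mx add_row_mx !big1_eq addr0 add0r.
by rewrite -(basis_expand _ He1) -(basis_expand _ He2) hsubmxK.
Qed.

Lemma dbas_basis : is_basis dbas.
Proof. by apply: span_basis => v; exists (dcoord v); apply: dbas_expand. Qed.

Lemma dual_dbas v k : dual dbas k v = dcoord v k.
Proof. by apply: dual_coord; [exact: dbas_basis | exact: dbas_expand]. Qed.

Lemma dual_dbas_l v i : dual dbas (lshift b i) v = dual e1 i (lsubmx v).
Proof. by rewrite dual_dbas /dcoord split_lshift. Qed.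
Lemma dual_dbas_r v j : dual dbas (rshift a j) v = dual e2 j (rsubmx v).
Proof. by rewrite dual_dbas /dcoord split_rshift. Qed.

Hypothesis Hbr1 : is_lie_bracket br1.
Hypothesis Hbr2 : is_lie_bracket br2.

Lemma dsum_nice : nice_basis br1 e1 -> nice_basis br2 e2 -> nice_basis dsum dbas.
Proof.
move=> N1 N2; have U1 := U_of_nice N1; have U2 := U_of_nice N2.
case: N1 => _ M1 _; case: N2 => _ M2 _.
apply: nice_of_U; [exact: dsum_lie | exact: dbas_basis | |].
- apply: split_ind => i; apply: split_ind => l.
  + have [m [c Hc]] := M1 i l; exists (lshift b m), c.
    by rewrite !dbas_l dsum_row Hc (br0l Hbr2) scale_row_mx scaler0.
  + exists (lshift b i), 0.
    by rewrite dbas_l dbas_r dsum_row (br0r Hbr1) (br0l Hbr2) row_mx0 scale0r.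
  + exists (lshift b l), 0.
    by rewrite dbas_l dbas_r dsum_row (br0r Hbr2) (br0l Hbr1) row_mx0 scale0r.
  + have [m [c Hc]] := M2 i l; exists (rshift a m), c.
    by rewrite !dbas_r dsum_row Hc (br0l Hbr1) scale_row_mx scaler0.
- apply: split_ind => i; apply: split_ind => k; apply: split_ind => l;
  apply: split_ind => l';
  rewrite ?dbas_l ?dbas_r ?dsum_row ?dual_dbas_l ?dual_dbas_r ?row_mxKl ?row_mxKr
    ?(br0l Hbr1) ?(br0r Hbr1) ?(br0l Hbr2) ?(br0r Hbr2) ?dual0 ?eqxx //.
  + by move=> H H'; rewrite (U1 _ _ _ _ H H').
  + by move=> H H'; rewrite (U2 _ _ _ _ H H').
Qed.

End DSum.
Definition br0 (u v : vec 1) : vec 1 := 0.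
Definition std1 (o : 'I_1) : vec 1 := const_mx 1.

Lemma br0_lie : is_lie_bracket br0.
Proof. by split => *; rewrite /br0 ?scaler0 ?addr0. Qed.

Lemma br0_nil : nilpotent_lie br0.
Proof. split; first exact: br0_lie. by exists 1%N => [[|x [|]]] //. Qed.

Lemma std1_basis : is_basis std1.
Proof.
apply: span_basis => v; exists (fun _ => v 0 0); rewrite big_ord1.
by apply/rowP => j; rewrite !mxE (ord1 j) mulr1.
Qed.

Lemma std1_nice : nice_basis br0 std1.
Proof.
apply: nice_of_U; [exact: br0_lie | exact: std1_basis | |].
  by move=> i j; exists i, 0; rewrite scale0r.
by move=> i k l l'; rewrite /br0 dual0 eqxx.
Qed.

Lemma const1_neq0 : (const_mx 1 : vec 1) != 0.
Proof. by apply/eqP => /rowP /(_ ord0); rewrite !mxE => /eqP; rewrite oner_eq0. Qed.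

Section Descent.
Variable n : nat.
Variable br : vec n -> vec n -> vec n.
Hypothesis Hbr : is_lie_bracket br.
Variables e e' : 'I_n -> vec n.
Hypothesis He : is_basis e.
Hypothesis He' : is_basis e'.
Hypothesis Ne : nice_basis br e.

Lemma descend : equiv_nice (dsum br0 br) (dbas std1 e) (dbas std1 e') -> equiv_nice br e e'.
Proof.
move=> Heq.
have Hbr' : is_lie_bracket (dsum br0 br) := dsum_lie br0_lie Hbr.
have HE := dbas_basis std1_basis He.
have HE' := dbas_basis std1_basis He'.
have [phi [sc [c [Hphi Hc Hinj Hc0]]]] := equiv_data HE HE' Heq.
set l0 := lshift n (ord0 : 'I_1).
have brzl : forall u y, dsum br0 br (row_mx u 0) y = 0.
  by move=> u y; rewrite /dsum row_mxKr (br0l Hbr) /br0 row_mx0.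
have brzr : forall u y, dsum br0 br y (row_mx u 0) = 0.
  by move=> u y; rewrite /dsum row_mxKr (br0r Hbr) /br0 row_mx0.
have PE : forall a, phi (dbas std1 e a) = match split (sc a) with
    inl _ => row_mx (c a *: const_mx 1) 0 | inr j => row_mx 0 (c a *: e' j) end.
  by move=> a; rewrite Hc /dbas; case: (split (sc a)) => x; rewrite scale_row_mx scaler0.
have scE : forall a, sc a = unsplit (split (sc a)) by move=> a; rewrite splitK.
have central_r : forall j0, split (sc l0) = inr j0 -> forall w, br (e' j0) w = 0.
  move=> j0 Hs w; have [_ [g phig gphi] _] := Hphi.
  have H := phi_br Hphi (dbas std1 e l0) (g (row_mx 0 w)).
  rewrite gphi PE Hs dbas_l brzl (phi0 Hphi) dsum_row (brZl Hbr) in H.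
  move: H; rewrite -[0 in LHS](@row_mx0 _ 1 1 n) => /eq_row_mx [_ /esym/eqP].
  by rewrite scaler_eq0 (negbTE (Hc0 _)) => /eqP.
pose tau i := match split (sc (rshift 1 i)) with inr j => j
   | inl _ => match split (sc l0) with inr j0 => j0 | inl _ => i end end.
pose d i := match split (sc (rshift 1 i)) with inr _ => c (rshift 1 i) | inl _ => 1 end.
have HT : forall i,
   (exists j, [/\ split (sc (rshift 1 i)) = inr j, tau i = j & d i = c (rshift 1 i)]) \/
   (exists o j0, [/\ split (sc (rshift 1 i)) = inl o, split (sc l0) = inr j0,
                    tau i = j0 & d i = 1]).
  move=> i; rewrite /tau /d; case Hs: (split (sc (rshift 1 i))) => [o|j].
    right; case Hs0: (split (sc l0)) => [o'|j0]; last by exists o, j0.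
    exfalso; have : sc l0 = sc (rshift 1 i) by rewrite scE Hs0 [RHS]scE Hs /= !ord1.
    by move/Hinj/(congr1 val) => /=; rewrite add1n.
  by left; exists j.
apply: (@equiv_of_map _ br Hbr e e' tau d He He').
- move=> i i'; case: (HT i) => [[j [Hs -> _]]|[o [j0 [Hs Hs0 -> _]]]];
    case: (HT i') => [[j' [Hs' -> _]]|[o' [j0' [Hs' Hs0' -> _]]]].
  + move=> Hjj; apply: (@rshift_inj 1); apply: Hinj.
    by rewrite scE Hs [RHS]scE Hs' Hjj.
  + move=> Hjj; exfalso; have : sc (rshift 1 i) = sc l0 by rewrite scE Hs [RHS]scE Hs0' Hjj.
    by move/Hinj/(congr1 val) => /=; rewrite add1n.
  + move=> Hjj; exfalso; have : sc (rshift 1 i') = sc l0 by rewrite scE Hs' [RHS]scE Hs0 Hjj.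
    by move/Hinj/(congr1 val) => /=; rewrite add1n.
  + move=> _; apply: (@rshift_inj 1); apply: Hinj.
    by rewrite scE Hs [RHS]scE Hs' /= !ord1.
- by move=> i; case: (HT i) => [[j [_ _ ->]]|[o [j0 [_ _ _ ->]]]]; rewrite ?oner_eq0.
- move=> i l; case: Ne => _ M _; have [s [lam Hl]] := M i l.
  rewrite Hl lobZ lob_e //.
  have Hst : lam *: phi (dbas std1 e (rshift 1 s)) =
             dsum br0 br (phi (dbas std1 e (rshift 1 i))) (phi (dbas std1 e (rshift 1 l))).
    rewrite -(phiZ Hphi) -(phi_br Hphi) !dbas_r dsum_row Hl /br0.
    by rewrite scale_row_mx scaler0.
  have lam0 : (forall a o, split (sc a) = inl o -> a = rshift 1 i \/ a = rshift 1 l ->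
                lam = 0).
    move=> a o Hs Ha; move: Hst; rewrite PE.
    have -> : dsum br0 br (phi (dbas std1 e (rshift 1 i))) (phi (dbas std1 e (rshift 1 l))) = 0.
      by case: Ha => <-; rewrite (PE a) Hs ?brzl ?brzr.
    case: (split (sc (rshift 1 s))) => [o'|j''] /eqP; rewrite scaler_eq0 => /orP [/eqP //|].
      rewrite -row_mx0 => /eqP /eq_row_mx [/eqP + _].
      by rewrite scaler_eq0 (negbTE (Hc0 _)) (negbTE const1_neq0).
    rewrite -row_mx0 => /eqP /eq_row_mx [_ /eqP].
    by rewrite scaler_eq0 (negbTE (Hc0 _)) (negbTE (basis_neq0 _ He')).
  case: (HT i) => [[j [Hsi Hti Hdi]]|[o [j0 [Hsi Hs0 Hti Hdi]]]]; last first.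
    rewrite (lam0 _ _ Hsi (or_introl erefl)) scale0r Hti (brZl Hbr) central_r //.
    by rewrite scaler0.
  case: (HT l) => [[j' [Hsl Htl Hdl]]|[o [j0 [Hsl Hs0 Htl Hdl]]]]; last first.
    rewrite (lam0 _ _ Hsl (or_intror erefl)) scale0r Htl (brZr Hbr) (br_anti Hbr) central_r //.
    by rewrite oppr0 scaler0.
  move: Hst; rewrite !PE Hsi Hsl dsum_row /br0 Hti Htl Hdi Hdl.
  have [->|Hlam] := eqVneq lam 0.
    rewrite !scale0r => /esym; rewrite -row_mx0 => /eq_row_mx [_ ->] //.
  case: (HT s) => [[j'' [Hss Hts Hds]]|[o' [j0 [Hss Hs0 Hts Hds]]]].
    rewrite Hss Hts Hds scale_row_mx scaler0 => /eq_row_mx [_ <-] //.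
  rewrite Hss scale_row_mx scaler0 => /eq_row_mx [/eqP + _].
  rewrite scalerA scaler_eq0 mulf_eq0 (negbTE Hlam) (negbTE (Hc0 _)) /=.
  by rewrite (negbTE const1_neq0).
Qed.

End Descent.
Lemma carries_S n m : carries n m -> carries n.+1 m.
Proof.
case=> br [Nbr [B [HB Hne]]].
have Hbr : is_lie_bracket br by case: Nbr.
exists (dsum br0 br : vec n.+1 -> vec n.+1 -> vec n.+1); split.
  exact: (dsum_nil br0_nil Nbr).
exists (fun k => dbas std1 (B k) : 'I_n.+1 -> vec n.+1); split.
  move=> k; have [HBk _ _] := HB k.
  exact: (dsum_nice std1_basis HBk br0_lie Hbr std1_nice (HB k)).
move=> k l Hkl Heq; apply: (Hne k l Hkl).
have [HBk _ _] := HB k; have [HBl _ _] := HB l.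
exact: (descend Hbr HBk HBl (HB k) Heq).
Qed.
Definition i0 : 'I_3 := @Ordinal 3 0 isT.
Definition i1 : 'I_3 := @Ordinal 3 1 isT.
Definition i2 : 'I_3 := @Ordinal 3 2 isT.

Definition coef (u v : vec 3) : RR := u 0 i0 * v 0 i1 - u 0 i1 * v 0 i0.
Definition br3 (u v : vec 3) : vec 3 := coef u v *: delta_mx 0 i2.
Definition std3 (p : 'I_3) : vec 3 := delta_mx 0 p.

Lemma coefD (a : RR) x y z : coef (a *: x + y) z = a * coef x z + coef y z.
Proof. rewrite /coef !mxE; ring. Qed.
Lemma coefDr (a : RR) x y z : coef z (a *: x + y) = a * coef z x + coef z y.
Proof. rewrite /coef !mxE; ring. Qed.

Lemma coef_d2 v : coef v (delta_mx 0 i2) = 0.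
Proof. by rewrite /coef !mxE /= !mulr0 subrr. Qed.
Lemma coef_d2l v : coef (delta_mx 0 i2) v = 0.
Proof. by rewrite /coef !mxE /= !mul0r subrr. Qed.

Lemma coef_sd2 u c : coef u (c *: delta_mx 0 i2) = 0.
Proof. by rewrite /coef !mxE /= !mulr0 subrr. Qed.

Lemma br3_lie : is_lie_bracket br3.
Proof.
split.
- by move=> a x y z; rewrite /br3 coefD scalerDl scalerA.
- by move=> a x y z; rewrite /br3 coefDr scalerDl scalerA.
- by move=> x; rewrite /br3 /coef mulrC subrr scale0r.
- move=> x y z; rewrite /br3 -!scalerDl.
  by rewrite !coef_sd2 !addr0 scale0r.
Qed.

Lemma br3_nil : nilpotent_lie br3.
Proof.
split; first exact: br3_lie.
exists 2%N => [[|x [|y [|]]]] // z _ /=.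
by rewrite {1}/br3 /br3 coef_sd2 scale0r.
Qed.

Lemma std3_expand (v : vec 3) : v = \sum_p v 0 p *: std3 p.
Proof. by rewrite {1}(row_sum_delta v). Qed.

Lemma std3_basis : is_basis std3.
Proof. by apply: span_basis => v; exists (fun p => v 0 p); apply: std3_expand. Qed.

Lemma dual_std3 k v : dual std3 k v = v 0 k.
Proof. by apply: (dual_coord (w := fun p => v 0 p)); [exact: std3_basis|exact: std3_expand]. Qed.

Lemma kappa_nz p q : coef (std3 p) (std3 q) != 0 ->
  (p == i0) && (q == i1) || (p == i1) && (q == i0).
Proof.
rewrite /coef /std3 !mxE /= ![i0 == _]eq_sym ![i1 == _]eq_sym.
by case: (p == i0); case: (q == i1); case: (p == i1); case: (q == i0);
  rewrite /= ?mulr1 ?mulr0 ?mul1r ?mul0r ?subrr ?subr0 ?eqxx.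
Qed.

Lemma kappa_uniq p q q' : coef (std3 p) (std3 q) != 0 -> coef (std3 p) (std3 q') != 0 -> q = q'.
Proof.
move=> /kappa_nz /orP [/andP [/eqP -> /eqP ->]|/andP [/eqP -> /eqP ->]]
       /kappa_nz /orP [/andP [/eqP H /eqP ->]|/andP [/eqP H /eqP ->]] //.
Qed.

Lemma br3_std p q : br3 (std3 p) (std3 q) = coef (std3 p) (std3 q) *: std3 i2.
Proof. by []. Qed.

Lemma std3_nice : nice_basis br3 std3.
Proof.
apply: nice_of_U; [exact: br3_lie|exact: std3_basis| |].
  by move=> i j; exists i2, (coef (std3 i) (std3 j)).
move=> i k l l'; rewrite !dual_std3 /br3 !mxE !mulf_eq0 !negb_or => /andP [H _] /andP [H' _].
exact: kappa_uniq H H'.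
Qed.

Lemma br3_noPp x : ~ Pp br3 x.
Proof.
case=> y [y' H]; rewrite /br3 in H.
set al := coef x y in H; set be := coef x y' in H.
have [/andP [/eqP Ha /eqP Hb]|Hab] := boolP ((al == 0) && (be == 0)).
  have [] := H 1 0; first by rewrite Ha Hb !scale0r !scaler0 addr0.
  by move/eqP; rewrite oner_eq0.
have [] := H be (- al).
  by rewrite !scalerA -scalerDl mulNr mulrC subrr scale0r.
move=> Hbe Hal; move: Hab; rewrite Hbe; move/eqP: Hal; rewrite oppr_eq0 => /eqP ->.
by rewrite eqxx.
Qed.
Definition sgn (s : bool) : RR := if s then -1 else 1.
Definition mk (s : bool) (p : 'I_3) : 'I_(3 + 3) := if s then rshift 3 p else lshift 3 p.
Definition sg (k : 'I_(3 + 3)) : bool := match split k with inl _ => false | inr _ => true end.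
Definition pos (k : 'I_(3 + 3)) : 'I_3 := match split k with inl p => p | inr p => p end.

Lemma sg_l p : sg (lshift 3 p) = false. Proof. by rewrite /sg split_lshift. Qed.
Lemma sg_r p : sg (rshift 3 p) = true. Proof. by rewrite /sg split_rshift. Qed.
Lemma pos_l p : pos (lshift 3 p) = p. Proof. by rewrite /pos split_lshift. Qed.
Lemma pos_r p : pos (rshift 3 p) = p. Proof. by rewrite /pos split_rshift. Qed.
Lemma sg_mk s p : sg (mk s p) = s. Proof. by case: s; rewrite /mk ?sg_l ?sg_r. Qed.
Lemma pos_mk s p : pos (mk s p) = p. Proof. by case: s; rewrite /mk ?pos_l ?pos_r. Qed.
Lemma mk_sgpos k : mk (sg k) (pos k) = k.
Proof. by move: k; apply: split_ind => p; rewrite ?sg_l ?sg_r ?pos_l ?pos_r. Qed.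

Definition Tw (k : 'I_(3 + 3)) : vec (3 + 3) :=
  row_mx (std3 (pos k)) (sgn (sg k) *: std3 (pos k)).

Notation br6 := (dsum br3 br3).

Lemma T_br i l : br6 (Tw i) (Tw l) =
  coef (std3 (pos i)) (std3 (pos l)) *: Tw (mk (sg i (+) sg l) i2).
Proof.
rewrite /Tw dsum_row sg_mk pos_mk (brZl br3_lie) (brZr br3_lie) !br3_std scale_row_mx.
rewrite !scalerA; congr (row_mx _ (_ *: _)).
by case: (sg i); case: (sg l); rewrite /sgn /=; ring.
Qed.

Definition wT (v : vec (3 + 3)) (k : 'I_(3 + 3)) : RR :=
  (lsubmx v 0 (pos k) + sgn (sg k) * rsubmx v 0 (pos k)) / 2.

Lemma T_expand (v : vec (3 + 3)) : v = \sum_k wT v k *: Tw k.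
Proof.
have -> : \sum_k wT v k *: Tw k = \sum_(p < 3)
  (wT v (lshift 3 p) *: Tw (lshift 3 p) + wT v (rshift 3 p) *: Tw (rshift 3 p)).
  by rewrite big_split_ord big_split.
rewrite (eq_bigr (fun p => row_mx (lsubmx v 0 p *: std3 p) (rsubmx v 0 p *: std3 p))).
  by rewrite sum_row_mx -!std3_expand hsubmxK.
move=> p _; rewrite /wT /Tw !sg_l !pos_l !sg_r !pos_r /sgn !scale_row_mx add_row_mx.
congr row_mx; rewrite ?scalerA -scalerDl; congr (_ *: _); by field.
Qed.

Lemma T_basis : is_basis Tw.
Proof. by apply: span_basis => v; exists (wT v); apply: T_expand. Qed.

Lemma T_nice : nice_basis br6 Tw.
Proof.
apply: nice_of_U; [exact: (dsum_lie br3_lie br3_lie)|exact: T_basis| |].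
  by move=> i j; exists (mk (sg i (+) sg j) i2), (coef (std3 (pos i)) (std3 (pos j))); rewrite T_br.
move=> i k l l'; rewrite !T_br !dualZ !dual_basis; try exact: T_basis.
rewrite !mulf_eq0 !negb_or.
case/andP => H1 H2; case/andP => H1' H2'.
have E1 : mk (sg i (+) sg l) i2 = k.
  by apply/eqP; move: H2; case: (mk _ _ == k) => //=; rewrite mulr0n eqxx.
have E2 : mk (sg i (+) sg l') i2 = k.
  by apply/eqP; move: H2'; case: (mk _ _ == k) => //=; rewrite mulr0n eqxx.
have Hp := kappa_uniq H1 H1'.
have Hs : sg l = sg l'.
  have := congr1 sg (etrans E1 (esym E2)); rewrite !sg_mk.
  by case: (sg i); case: (sg l); case: (sg l').
by rewrite -(mk_sgpos l) -(mk_sgpos l') Hp Hs.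
Qed.

Lemma kappa_ne p : p != i2 -> coef (std3 p) (std3 (if p == i0 then i1 else i0)) != 0.
Proof.
have : (p == i0) || (p == i1) || (p == i2) by case: p => [[|[|[|m]]] Hp].
case/orP => [/orP [] /eqP ->|/eqP -> //]; rewrite /coef /std3 !mxE /=.
  by rewrite !mulr1 !mulr0 subr0 oner_eq0.
by rewrite !mulr1 !mulr0 sub0r oppr_eq0 oner_eq0.
Qed.

Lemma T_Pp k : `[< Pp br6 (Tw k) >] = (pos k != i2).
Proof.
have [Hk|Hk] := eqVneq (pos k) i2.
  rewrite asboolF // => [[y [y' H]]].
  have Z : forall w, br6 (Tw k) w = 0.
    move=> w; rewrite /dsum /Tw row_mxKl row_mxKr Hk (brZl br3_lie).
    by rewrite /br3 /std3 !coef_d2l !scale0r scaler0 row_mx0.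
  have [] := H 1 0; first by rewrite !Z !scaler0 addr0.
  by move/eqP; rewrite oner_eq0.
rewrite asboolT //.
set q := if pos k == i0 then i1 else i0.
exists (Tw (mk false q)), (Tw (mk true q)) => a b.
rewrite !T_br !sg_mk !pos_mk !scalerA.
have Hne : mk (sg k (+) true) i2 != mk (sg k (+) false) i2.
  by apply/eqP => /(congr1 sg); rewrite !sg_mk; case: (sg k).
move=> H; have := congr1 (dual Tw (mk (sg k (+) false) i2)) H.
have := congr1 (dual Tw (mk (sg k (+) true) i2)) H.
rewrite !dual0 !dualD !dualZ !dual_basis; try exact: T_basis.
rewrite !eqxx (negbTE Hne) eq_sym (negbTE Hne).
rewrite !mulr0 !mulr1 addr0 add0r => /eqP Hb /eqP Ha.
move: Ha Hb; rewrite !mulf_eq0 (negbTE (kappa_ne Hk)) !orbF.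
by move=> /eqP -> /eqP ->.
Qed.

Lemma T_cnt : cnt br6 Tw = 4%N.
Proof.
rewrite /cnt; under eq_bigr do rewrite T_Pp.
rewrite big_split_ord /=.
under eq_bigr do rewrite pos_l.
under [X in (_ + X)%N]eq_bigr do rewrite pos_r.
by rewrite !big_ord_recr big_ord0 /=.
Qed.
Section CntDsum.
Variables a b : nat.
Variable br1 : vec a -> vec a -> vec a.
Variable br2 : vec b -> vec b -> vec b.
Hypothesis Hbr1 : is_lie_bracket br1.
Hypothesis Hbr2 : is_lie_bracket br2.

Lemma Pp_dsum_l u : Pp (dsum br1 br2) (row_mx u 0) <-> Pp br1 u.
Proof.
split.
  case=> Y [Y' H]; exists (lsubmx Y), (lsubmx Y') => al be Hab; apply: H.
  by rewrite /dsum !row_mxKl !row_mxKr !(br0l Hbr2) !scale_row_mx !scaler0 add_row_mx Hab addr0 row_mx0.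
case=> y [y' H]; exists (row_mx y 0), (row_mx y' 0) => al be.
rewrite !dsum_row !(br0l Hbr2) !scale_row_mx !scaler0 add_row_mx addr0 -[0 in X in _ = X -> _]row_mx0.
by case/eq_row_mx => /H.
Qed.

Lemma Pp_dsum_r v : Pp (dsum br1 br2) (row_mx 0 v) <-> Pp br2 v.
Proof.
split.
  case=> Y [Y' H]; exists (rsubmx Y), (rsubmx Y') => al be Hab; apply: H.
  by rewrite /dsum !row_mxKl !row_mxKr !(br0l Hbr1) !scale_row_mx !scaler0 add_row_mx Hab addr0 row_mx0.
case=> y [y' H]; exists (row_mx 0 y), (row_mx 0 y') => al be.
rewrite !dsum_row !(br0l Hbr1) !scale_row_mx !scaler0 add_row_mx addr0 -[0 in X in _ = X -> _]row_mx0.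
by case/eq_row_mx => _ /H.
Qed.

Lemma cnt_dsum e1 e2 : cnt (dsum br1 br2) (dbas e1 e2) = (cnt br1 e1 + cnt br2 e2)%N.
Proof.
rewrite /cnt big_split_ord; congr addn; apply: eq_bigr => i _.
  by rewrite dbas_l (propext (Pp_dsum_l _)).
by rewrite dbas_r (propext (Pp_dsum_r _)).
Qed.
End CntDsum.

Lemma std6_cnt : cnt (dsum br3 br3) (dbas std3 std3) = 0%N.
Proof.
rewrite (cnt_dsum br3_lie br3_lie) /cnt !big1 // => i _; rewrite asboolF //; exact: br3_noPp.
Qed.

Definition zbr (m : nat) (u v : vec m) : vec m := 0.
Lemma zbr_nil m : nilpotent_lie (@zbr m).
Proof.
split; first by split => *; rewrite /zbr ?scaler0 ?addr0.
by exists 1%N => [[|x [|]]] //.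
Qed.

Fixpoint D (k : nat) : nat := if k is k'.+1 then (D k' + (3 + 3))%N else 0%N.

Lemma D_eq k : D k = (6 * k)%N.
Proof. by elim: k => //= k ->; rewrite mulnS addnC. Qed.

Lemma constr k : exists br : vec (D k) -> vec (D k) -> vec (D k), nilpotent_lie br /\
  exists B : 'I_k.+1 -> 'I_(D k) -> vec (D k),
    (forall j, nice_basis br (B j)) /\ (forall j : 'I_k.+1, cnt br (B j) = 4 * j)%N.
Proof.
elim: k => [|k [br [Nbr [B [NB CB]]]]].
  exists (@zbr 0); split; first exact: zbr_nil.
  exists (fun _ _ => 0); split; last by move=> j; rewrite (ord1 j) /cnt big_ord0.
  move=> j; apply: nice_of_U; [by case: (zbr_nil 0)| | by case | by case].
  by apply: span_basis => v; exists (fun _ => 0); rewrite big_ord0; apply/rowP; case.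
have Hbr : is_lie_bracket br by case: Nbr.
have H6 : is_lie_bracket (dsum br3 br3) := dsum_lie br3_lie br3_lie.
exists (dsum br (dsum br3 br3) : vec (D k.+1) -> vec (D k.+1) -> vec (D k.+1)); split.
  exact: (dsum_nil Nbr (dsum_nil br3_nil br3_nil)).
exists (fun j => match unlift ord_max j with
  | Some j' => dbas (B j') (dbas std3 std3) | None => dbas (B ord_max) Tw end).
have Hstd6 : nice_basis (dsum br3 br3) (dbas std3 std3).
  exact: (dsum_nice std3_basis std3_basis br3_lie br3_lie std3_nice std3_nice).
have HB : forall j, is_basis (B j) by move=> j; case: (NB j).
split => j; case: unliftP => [j' Hj|Hj].
- exact: (dsum_nice (HB j') (dbas_basis std3_basis std3_basis) Hbr H6 (NB j') Hstd6).
- exact: (dsum_nice (HB ord_max) T_basis Hbr H6 (NB ord_max) T_nice).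
- by rewrite (cnt_dsum Hbr H6) std6_cnt CB addn0 Hj lift_max.
- by rewrite (cnt_dsum Hbr H6) T_cnt CB Hj /= mulnS addnC.
Qed.

Lemma carries_D k : carries (D k) k.+1.
Proof.
have [br [Nbr [B [NB CB]]]] := constr k.
have Hbr : is_lie_bracket br by case: Nbr.
exists br; split => //; exists B; split => // j l Hjl Heq.
have [HBj _ _] := NB j; have [HBl _ _] := NB l.
have := cnt_equiv Hbr HBj HBl Heq; rewrite !CB => /eqP; rewrite eqn_mul2l /=.
by move=> Hv; move: Hjl; rewrite (val_inj (eqP Hv)) eqxx.
Qed.

Lemma carries_add n m r : carries n m -> carries (n + r) m.
Proof. by move=> H; elim: r => [|r IH]; rewrite ?addn0 // addnS; apply: carries_S. Qed.

Lemma carries_main n : carries n (n %/ 6).+1.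
Proof.
have := carries_add (n %% 6) (carries_D (n %/ 6)).
by rewrite D_eq mulnC -divn_eq.
Qed.

Lemma f_ge n m : carries n m -> ((m%:R)%:E <= f n :> \bar RR)%E.
Proof. by move=> H; apply: ereal_sup_ubound; exists m. Qed.

Theorem mainTheorem1 :
  (forall n : nat, (f n <= f n.+1)%E) /\
  (forall M : RR, exists n : nat, (M%:E < f n)%E) /\
  (forall n : nat, (((n %/ 6)%N.+1)%:R%:E <= f n :> \bar RR)%E).
Proof.
split.
  move=> n; apply: le_ereal_sup => x [m Hm <-]; exists m => //.
  exact: carries_S.
split; last by move=> n; apply: f_ge; exact: carries_main.
move=> M; set N := Num.Def.archi_bound `|M|.
exists (6 * N)%N; apply: (lt_le_trans _ (f_ge (carries_main (6 * N)))).
rewrite mulKn // lte_fin.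
apply: (le_lt_trans (ler_norm M)); apply: (lt_trans (archi_boundP (normr_ge0 M))).
by rewrite ltr_nat.
Qed.
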